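(* Let $S=\{a_i \bmod d_i : 1\le i\le r\}$ be an exact covering system with $r\ge 2$, and let $G_S$ be its exact covering system digraph. Then every (weakly connected) component of $G_S$ contains exactly one directed cycle.
   Context: A system of congruences $S=\{a_i \bmod d_i : 1\le i\le r\}$ with integers $a_i$ and nonzero integers $d_i$ (negative $d_i$ allowed; $n\equiv a \bmod -d$ means $n\equiv a\bmod d$) is an exact covering system if every integer satisfies exactly one of the congruences; congruences are distinguished by their chosen representatives $a_i$. The exact covering system digraph $G_S$ has vertex set $\mathbb{Z}$ and edges $(n,d_in+a_i)$ for all $n\in\mathbb{Z}$, $1\le i\le r$ (loops count as cycles of length one); $r$ is its degree. A component means a connected component of the underlying undirected graph. *)

(* Defs.v *)
From mathcomp Require Import all_boot all_algebra.
From Stdlib Require Import Relations.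
Set Implicit Arguments. Unset Strict Implicit. Unset Printing Implicit Defensive.
Import GRing.Theory Num.Theory.
Local Open Scope ring_scope.

(* A system of congruences is a list of pairs (a_i, d_i) : int * int,
   the congruence "n = a_i mod d_i" holding iff d_i divides n - a_i
   (so negative d_i behave like -d_i).  Congruences are indexed by their
   position in the list (distinguished by chosen representatives). *)
Definition congr_holds (n : int) (c : int * int) : bool := (c.2 %| n - c.1)%Z.

Definition exact_covering (S : seq (int * int)) : Prop :=
  all (fun c => c.2 != 0) S /\ forall n : int, count (congr_holds n) S = 1%N.

Definition edge_target (S : seq (int * int)) (e : int * nat) : int :=
  let c := nth (0, 0) S e.2 in c.2 * e.1 + c.1.

Definition ecs_edge (S : seq (int * int)) (n m : int) : Prop :=
  exists2 i : nat, (i < size S)%N & m = edge_target S (n, i).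

Definition ecs_weakly_connected (S : seq (int * int)) : relation int :=
  clos_refl_sym_trans int (ecs_edge S).

(* A directed cycle of G_S, given as the cyclic list of its edges
   (n_0,i_0), ..., (n_{k-1},i_{k-1}), k >= 1 (loops are cycles of length 1),
   with pairwise distinct vertices n_j and the target of edge j being the
   source of edge j+1 (mod k). *)
Definition is_dicycle (S : seq (int * int)) (c : seq (int * nat)) : Prop :=
  [/\ c <> [::], all (fun e => (e.2 < size S)%N) c, uniq (map fst c) &
      forall j : nat, (j < size c)%N ->
        edge_target S (nth (0, 0%N) c j) = (nth (0, 0%N) c (j.+1 %% size c)).1].

(* Main.v *)
Require Import Defs.
From mathcomp Require Import all_boot all_algebra zify.
From Stdlib Require Import Relations.
Import GRing.Theory Num.Theory.
Set Implicit Arguments. Unset Strict Implicit.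

Definition idx (S : seq (int * int)) (m : int) : nat := find (congr_holds m) S.
Definition pre (S : seq (int * int)) (m : int) : int :=
  let c := nth (0, 0)%R S (idx S m) in ((m - c.1) %/ c.2)%Z.

Lemma count_one_idx (T : Type) (P : pred T) (s : seq T) (x0 : T) (i : nat) :
  count P s = 1%N -> (i < size s)%N -> P (nth x0 s i) -> i = find P s.
Proof.
move=> hc hi hP.
have hf : (find P s <= i)%N.
  rewrite leqNgt; apply/negP => lt; by rewrite (before_find x0 lt) in hP.
move: hf; rewrite leq_eqVlt => /orP [/eqP -> // | lt].
have hs : has P s by apply/(has_nthP x0); exists i.
have ht : has P (take i s) by rewrite has_take.
move: hc; rewrite -(cat_take_drop i s) count_cat (drop_nth x0 hi) /= hP.
move: ht; rewrite has_count. lia.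
Qed.

Lemma idx_lt S (H : exact_covering S) m : (idx S m < size S)%N.
Proof.
case: H => _ /(_ m) hc. rewrite /idx -has_find has_count hc //.
Qed.

Lemma idx_holds S (H : exact_covering S) m : congr_holds m (nth (0,0)%R S (idx S m)).
Proof.
case: H => _ /(_ m) hc. apply: nth_find. by rewrite has_count hc.
Qed.

Lemma d_nz S (H : exact_covering S) i : (i < size S)%N -> (nth (0,0)%R S i).2 != 0%R.
Proof. case: H => /all_nthP h _ /h; exact. Qed.

Lemma edge_pre S (H : exact_covering S) m : edge_target S (pre S m, idx S m) = m.
Proof.
have := idx_holds H m. rewrite /edge_target /pre /congr_holds /=.
set c := nth _ _ _ => hd.
by rewrite mulrC divzK // subrK.
Qed.

Lemma edge_uniq S (H : exact_covering S) n i m :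
  (i < size S)%N -> edge_target S (n, i) = m -> i = idx S m /\ n = pre S m.
Proof.
move=> hi he.
have hP : congr_holds m (nth (0,0)%R S i).
  rewrite /congr_holds -he /edge_target /= addrK. exact: dvdz_mulr (dvdzz _).
have ei : i = idx S m by exact: (count_one_idx (proj2 H m) hi hP).
split=> //.
have h2 : edge_target S (pre S m, i) = edge_target S (n, i) by rewrite he ei edge_pre.
move: h2; rewrite /edge_target /= => /addIr; move: (d_nz H hi) => /mulfI hm /hm -> //.

Qed.
Lemma abs_d S (H : exact_covering S) i : (2 <= size S)%N -> (i < size S)%N ->
  (2 <= absz (nth (0,0)%R S i).2)%N.
Proof.
move=> h2 hi.
have hnz := d_nz H hi.
rewrite leqNgt; apply/negP => hlt.
have h1 : absz (nth (0,0)%R S i).2 = 1%N.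
  move: hnz hlt; set d := (nth _ _ _).2; lia.
set j := if i == 0%N then 1%N else 0%N.
have hj : (j < size S)%N by rewrite /j; case: (i == 0%N); lia.
have hij : i != j by rewrite /j; case: (i =P 0%N) => [->|] //; lia.
set n := (nth (0,0)%R S j).1.
have Pi : congr_holds n (nth (0,0)%R S i) by rewrite /congr_holds dvdzE h1 dvd1n.
have Pj : congr_holds n (nth (0,0)%R S j) by rewrite /congr_holds /n subrr dvdz0.
have := count_one_idx (proj2 H n) hi Pi.
have := count_one_idx (proj2 H n) hj Pj.
move=> <- eij; by rewrite eij eqxx in hij.
Qed.

Definition Abnd (S : seq (int * int)) : nat := sumn [seq absz c.1 | c <- S].

Lemma a_le S i : (i < size S)%N -> (absz (nth (0,0)%R S i).1 <= Abnd S)%N.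
Proof.
elim: S i => [|c S IH] [|i] //= hi; rewrite /Abnd /=.
  exact: leq_addr.
have := IH i hi. rewrite /Abnd => h. exact: leq_trans h (leq_addl _ _).
Qed.

Lemma pre_bound S (H : exact_covering S) m : (2 <= size S)%N ->
  (2 * absz (pre S m) <= absz m + Abnd S)%N.
Proof.
move=> h2.
have hi := idx_lt H m.
have hd := abs_d H h2 hi.
have ha := a_le hi.
have e := edge_pre H m.
move: e; rewrite /edge_target /=.
set d := (nth _ _ _).2; set a := (nth _ _ _).1.
move=> e.
have e3 : (d * pre S m = m - a)%R by apply: (addIr a); rewrite subrK e.
have e2 : absz d * absz (pre S m) = absz (m - a)%R by rewrite -abszM e3.
have : (absz (m - a)%R <= absz m + absz a)%N by lia.
have h3 : (2 * absz (pre S m) <= absz d * absz (pre S m))%N by rewrite leq_mul2r hd orbT.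
move=> h4; rewrite e2 in h3. exact: leq_trans h3 (leq_trans h4 (leq_add (leqnn _) ha)).
Qed.

Lemma iter_bound S (H : exact_covering S) v k : (2 <= size S)%N ->
  (absz (iter k (pre S) v) <= maxn (absz v) (Abnd S))%N.
Proof.
move=> h2; elim: k => [|k IH] /=; first lia.
have := pre_bound H (iter k (pre S) v) h2. lia.
Qed.

Lemma wc_pre S (H : exact_covering S) x : ecs_weakly_connected S x (pre S x).
Proof.
apply: rst_sym; apply: rst_step. exists (idx S x); first exact: idx_lt.
by rewrite edge_pre.
Qed.

Lemma wc_iter S (H : exact_covering S) x k : ecs_weakly_connected S x (iter k (pre S) x).
Proof.
elim: k => [|k IH] /=; first exact: rst_refl.
apply: rst_trans IH _; exact: wc_pre.
Qed.

Lemma wc_meet S (H : exact_covering S) x y : ecs_weakly_connected S x y ->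
  exists k l, iter k (pre S) x = iter l (pre S) y.
Proof.
elim=> {x y}.
- move=> x y [i hi he]. have [_ ->] := edge_uniq H hi (esym he). by exists 0%N, 1%N.
- by move=> x; exists 0%N, 0%N.
- by move=> x y _ [k [l e]]; exists l, k.
- move=> x y z _ [k [l e1]] _ [k' [l' e2]].
  exists (k' + k)%N, (l + l')%N.
  rewrite iterD e1 -iterD addnC iterD e2 -iterD //.
Qed.

Lemma shift_lt (x : int) (B : nat) : (absz x <= B)%N -> (absz (x + B%:Z)%R < 0 + (2 * B + 1))%N.
Proof. lia. Qed.

Lemma shift_inj (x y : int) (B : nat) : (absz x <= B)%N -> (absz y <= B)%N ->
  absz (x + B%:Z)%R = absz (y + B%:Z)%R -> x = y.
Proof. lia. Qed.

Lemma pigeon S (H : exact_covering S) v : (2 <= size S)%N ->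
  exists i j, (i < j)%N /\ iter i (pre S) v = iter j (pre S) v.
Proof.
move=> h2.
set B := maxn (absz v) (Abnd S).
set f := fun k => absz (iter k (pre S) v + (B%:Z))%R.
set s1 := [seq f k | k <- iota 0 (2 * B + 1).+1].
have hsub : {subset s1 <= iota 0 (2 * B + 1)}.
  move=> y /mapP [k _ ->]; rewrite mem_iota /f /=.
  have := iter_bound H v k h2. rewrite -/B. move: (iter k (pre S) v) => x. exact: shift_lt.
have nu : ~~ uniq s1.
  apply/negP => u. have := uniq_leq_size u hsub. rewrite size_map !size_iota. lia.
have [i [j [hij hj he]]] := uniqPn 0%N nu.
exists i, j; split => //.
move: hj he; rewrite /s1 size_map size_iota => hj.
rewrite !(nth_map 0%N) ?size_iota //; last lia.
rewrite !nth_iota //; last lia.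
rewrite /f /= !add0n.
apply: shift_inj; exact: iter_bound.
Qed.

Lemma dc_edge S (H : exact_covering S) c j : is_dicycle S c -> (j < size c)%N ->
  nth (0%R : int, 0%N) c j = (pre S (nth (0%R : int, 0%N) c (j.+1 %% size c)).1,
                      idx S (nth (0%R : int, 0%N) c (j.+1 %% size c)).1).
Proof.
case=> _ /all_nthP ha _ he hj.
have := edge_uniq H (ha (0%R : int, 0%N) j hj) (he j hj).
case: (nth _ c j) => n i /= [-> ->] //.
Qed.

Lemma dc_predi (L i : nat) : (i < L)%N -> exists2 j, (j < L)%N & j.+1 %% L = i.
Proof.
move=> hi. case: i hi => [|i] hi.
- exists L.-1; first lia. have -> : L.-1.+1 = L by lia. by rewrite modnn.
- exists i; first lia. by rewrite modn_small.
Qed.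

Lemma dc_closed S (H : exact_covering S) c x : is_dicycle S c ->
  x \in map fst c -> pre S x \in map fst c.
Proof.
move=> hc /(nthP (0%R : int)) [i]; rewrite size_map => hi <-.
have [j hj ej] := dc_predi hi.
rewrite (nth_map (0%R : int, 0%N)) //.
have := dc_edge H hc hj; rewrite ej => e.
have -> : pre S (nth (0%R : int, 0%N) c i).1 = (nth (0%R : int, 0%N) c j).1 by rewrite e.
by apply: map_f; apply: mem_nth.
Qed.

Lemma dc_closed_iter S (H : exact_covering S) c x k : is_dicycle S c ->
  x \in map fst c -> iter k (pre S) x \in map fst c.
Proof. move=> hc hx; elim: k => [|k IH] //=; exact: dc_closed. Qed.

Lemma dc_iter_nth S (H : exact_covering S) c m j : is_dicycle S c -> (j < size c)%N ->
  iter m (pre S) (nth (0%R : int, 0%N) c ((j + m) %% size c)).1 = (nth (0%R : int, 0%N) c j).1.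
Proof.
move=> hc hj.
have L0 : (0 < size c)%N by lia.
elim: m => [|m IH]; first by rewrite addn0 modn_small.
rewrite iterSr.
set q := ((j + m) %% size c)%N.
have hq : (q < size c)%N by rewrite ltn_mod.
have e := dc_edge H hc hq.
have eq : (q.+1 %% size c)%N = ((j + m.+1) %% size c)%N.
  by rewrite /q -addn1 modnDml addn1 addnS.
rewrite -eq -IH -/q e //.
Qed.

Lemma dc_orbit S (H : exact_covering S) c x y : is_dicycle S c ->
  x \in map fst c -> y \in map fst c -> exists k, x = iter k (pre S) y.
Proof.
move=> hc /(nthP (0%R : int)) [j]; rewrite size_map => hj <-.
move=> /(nthP (0%R : int)) [i]; rewrite size_map => hi <-.
exists (i + size c - j)%N.
rewrite !(nth_map (0%R : int, 0%N)) //.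
rewrite -(dc_iter_nth H (i + size c - j) hc hj).
have -> : (j + (i + size c - j))%N = (i + size c)%N by lia.
by rewrite modnDr modn_small.
Qed.

Lemma dc_edges S (H : exact_covering S) c e : is_dicycle S c ->
  (e \in c <-> exists2 t, t \in map fst c & e = (pre S t, idx S t)).
Proof.
move=> hc; split.
- move=> /(nthP (0%R : int, 0%N)) [j hj <-].
  rewrite (dc_edge H hc hj). eexists; last reflexivity.
  apply: map_f; apply: mem_nth. rewrite ltn_mod; by case: hc => hn _ _ _; case: (c) hn.
- move=> [t /(nthP (0%R : int)) [i]]; rewrite size_map => hi <- ->.
  have [j hj ej] := dc_predi hi.
  rewrite (nth_map (0%R : int, 0%N)) // -ej -(dc_edge H hc hj).
  exact: mem_nth.
Qed.

Lemma dc_sub S (H : exact_covering S) c c' x : is_dicycle S c -> is_dicycle S c' ->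
  x \in map fst c -> x \in map fst c' -> {subset map fst c <= map fst c'}.
Proof.
move=> hc hc' hx hx' y hy.
have [k ->] := dc_orbit H hc hy hx.
exact: dc_closed_iter.
Qed.

Lemma dc_same S (H : exact_covering S) c c' x : is_dicycle S c -> is_dicycle S c' ->
  x \in map fst c -> x \in map fst c' -> c =i c'.
Proof.
move=> hc hc' hx hx' e.
apply/idP/idP.
- move=> /(dc_edges H e hc) [t ht ->]. apply/(dc_edges H _ hc'). exists t => //.
  exact: (dc_sub H hc hc' hx hx').
- move=> /(dc_edges H e hc') [t ht ->]. apply/(dc_edges H _ hc). exists t => //.
  exact: (dc_sub H hc' hc hx' hx).
Qed.

Lemma period S (H : exact_covering S) v : (2 <= size S)%N ->
  exists K L, [/\ (0 < L)%N, iter L (pre S) (iter K (pre S) v) = iter K (pre S) v &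
    forall k, (0 < k < L)%N -> iter k (pre S) (iter K (pre S) v) != iter K (pre S) v].
Proof.
move=> h2.
have [i [j [hij e]]] := pigeon H v h2.
set w := iter i (pre S) v.
have ex : exists n, (0 < n)%N && (iter n (pre S) w == w).
  exists (j - i)%N; apply/andP; split; first lia.
  by rewrite /w -iterD subnK ?e // ltnW.
exists i, (ex_minn ex).
case: ex_minnP => L /andP [L0 /eqP eL] hmin.
split => // k /andP [k0 kL]; apply/negP => /eqP ek.
have := hmin k; rewrite k0 ek eqxx => /(_ isT). lia.
Qed.

Definition mkcyc S w L : seq (int * nat) :=
  mkseq (fun j => (pre S (iter (L - j.+1) (pre S) w), idx S (iter (L - j.+1) (pre S) w))) L.

Lemma per_inj S w L a b : iter L (pre S) w = w ->
  (forall k, (0 < k < L)%N -> iter k (pre S) w != w) ->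
  (1 <= a)%N -> (a < b)%N -> (b <= L)%N -> iter a (pre S) w = iter b (pre S) w -> False.
Proof.
move=> eL hmin a1 ab bL e.
have := hmin (L - b + a)%N.
have -> : (0 < L - b + a < L)%N by lia.
move=> /(_ isT); rewrite iterD e -iterD subnK // eL eqxx //.
Qed.

Lemma mkcyc_dicycle S (H : exact_covering S) w L : (0 < L)%N -> iter L (pre S) w = w ->
  (forall k, (0 < k < L)%N -> iter k (pre S) w != w) -> is_dicycle S (mkcyc S w L).
Proof.
move=> L0 eL hmin.
have sz : size (mkcyc S w L) = L by rewrite size_mkseq.
split.
- by rewrite /mkcyc; case: L L0 {eL hmin sz}.
- apply/(all_nthP (0%R : int, 0%N)) => j; rewrite sz => hj.
  rewrite nth_mkseq //=; exact: idx_lt.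
- rewrite /mkcyc /mkseq -map_comp.
  rewrite map_inj_in_uniq ?iota_uniq //.
  move=> i j; rewrite !mem_iota /= => hi hj.
  rewrite -!iterS.
  have -> : (L - i.+1).+1 = (L - i)%N by lia.
  have -> : (L - j.+1).+1 = (L - j)%N by lia.
  move=> e; apply/eqP; apply: contraT => ne.
  case: (ltngtP i j) => hij.
  + have [] : False by apply: (@per_inj S w L (L - j) (L - i) eL hmin); (lia || by rewrite e).
  + have [] : False by apply: (@per_inj S w L (L - i) (L - j) eL hmin); (lia || by rewrite e).
  + by rewrite hij eqxx in ne.
- move=> j; rewrite sz => hj.
  rewrite nth_mkseq //= edge_pre //.
  case: (ltngtP j.+1 L) => hjL.
  + rewrite modn_small // nth_mkseq //= -iterS.
    have -> : (L - j.+2).+1 = (L - j.+1)%N by lia.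
    by [].
  + lia.
  + rewrite hjL modnn nth_mkseq //= -iterS.
    have -> : (L - 1).+1 = L by lia.
    by rewrite eL subnn.
Qed.

Lemma mkcyc_w S w L : (0 < L)%N -> iter L (pre S) w = w -> w \in map fst (mkcyc S w L).
Proof.
move=> L0 eL. apply/mapP; exists (nth (0%R : int, 0%N) (mkcyc S w L) 0).
  apply: mem_nth; by rewrite size_mkseq.
rewrite nth_mkseq //= -iterS.
have -> : (L - 1).+1 = L by lia.
by rewrite eL.
Qed.

Lemma mkcyc_mem S w L e : e \in mkcyc S w L -> exists n, e.1 = iter n (pre S) w.
Proof.
move=> /mapP [j _ ->]; by exists (L - j.+1).+1.
Qed.

Theorem mainTheorem5 (S : seq (int * int)) :
  (2 <= size S)%N -> exact_covering S ->
  forall v : int,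
    exists c : seq (int * nat),
      [/\ is_dicycle S c,
          (forall e, e \in c -> ecs_weakly_connected S v e.1) &
          (forall c' : seq (int * nat), is_dicycle S c' ->
             (exists2 e, e \in c' & ecs_weakly_connected S v e.1) ->
             c' =i c)].
Proof.
move=> h2 H v.
have [K [L [L0 eL hmin]]] := period H v h2.
set w := iter K (pre S) v in eL hmin.
have hc := mkcyc_dicycle H L0 eL hmin.
exists (mkcyc S w L); split => //.
- move=> e /mkcyc_mem [n ->]. rewrite /w -iterD. exact: wc_iter.
- move=> c' hc' [e he hve].
  have [k [l ekl]] := wc_meet H hve.
  have hx : iter k (pre S) w \in map fst (mkcyc S w L) := dc_closed_iter H k hc (mkcyc_w L0 eL).
  have hx' : iter k (pre S) w \in map fst c'.
    rewrite /w -iterD addnC iterD ekl. apply: (dc_closed_iter H K hc'); exact: (dc_closed_iter H l hc' (map_f fst he)).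
  move=> x; by rewrite (dc_same H hc hc' hx hx' x).
Qed.
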